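(* Let $1<p<\infty$, $\frac1p+\frac1q=1$, and $0<\gamma<1$. For any $n\in\mathbb{N}$ and any normalized blocks $x_1^*<\dots<x_n^*$ of $(e_j^* )_{j=1}^\infty$ in $Ti^*(p,\gamma)$, $$\left\|\sum_{j=1}^n x_j^*\right\|\le \frac{n^{\frac1q}}{\gamma}.$$
   Context: For $1<p<\infty$, $\frac1p+\frac1q=1$ and $0<\gamma<1$, the Tirilman space $Ti(p,\gamma)$ is the completion of $c_{00}$ (finitely supported real sequences) under the norm defined implicitly by $$\|a\|=\max\Big\{\|a\|_\infty,\ \gamma\sup\frac{\sum_{j=1}^n\|E_ja\|}{n^{1/q}}\Big\},$$ where the supremum is over all $n\in\mathbb{N}$ and all finite sets of consecutive natural numbers $E_1<\dots<E_n$ (meaning $\max E_i<\min E_{i+1}$), and $E_ja$ denotes the restriction of $a$ to $E_j$. The unit vectors $(e_n)$ form a 1-subsymmetric basis of $Ti(p,\gamma)$; $(e_n^* )$ denotes the biorthogonal functionals, a basis of the dual $Ti^*(p,\gamma)$. Normalized blocks of $(e^*_j)$ are norm-one vectors that are finite linear combinations of the $e^*_j$ with successive (disjoint, consecutive) supports. *)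

(* Defs.v *)
From HB Require Import structures.
From mathcomp Require Import all_boot all_order all_algebra.
From mathcomp Require Import all_classical all_reals all_analysis.
Set Implicit Arguments. Unset Strict Implicit. Unset Printing Implicit Defensive.
Import Order.TTheory GRing.Theory Num.Theory.
Local Open Scope classical_set_scope.
Local Open Scope ring_scope.

(* Real sequences are functions nat -> R; index j of the paper is k here
   (0-based indexing, irrelevant for the statement). *)
Section Tirilman.
Variable R : realType.

Definition finsupp (a : nat -> R) : Prop :=
  exists N : nat, forall k : nat, (N <= k)%N -> a k = 0.

Definition supnorm (a : nat -> R) : R := sup (range (fun k => `|a k|)).

Definition restr (m l : nat) (a : nat -> R) : nat -> R :=
  fun k => if (m <= k <= l)%N then a k else 0.

Definition admissible (s : seq (nat * nat)) : Prop :=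
  s != [::] /\ all (fun e => (e.1 <= e.2)%N) s /\
  sorted (fun e e' => (e.2 < e'.1)%N) s.

(* invq = 1/q, g = gamma.  Iterates of the implicit equation:
   ||a||_0 = ||a||_oo,
   ||a||_{k+1} = max(||a||_oo, g sup sum_j ||E_j a||_k / n^{1/q}). *)
Fixpoint tin_iter (invq g : R) (k : nat) (a : nat -> R) : R :=
  match k with
  | 0 => supnorm a
  | k'.+1 => Num.max (supnorm a)
      (g * sup [set r | exists s, admissible s /\
          r = (\sum_(e <- s) tin_iter invq g k' (restr e.1 e.2 a))
                / ((size s)%:R `^ invq)])
  end.

(* The Tirilman norm on c_00: the (increasing) limit of the iterates,
   i.e. the unique solution of the implicit equation. *)
Definition tinorm (invq g : R) (a : nat -> R) : R :=
  sup (range (fun k => tin_iter invq g k a)).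

(* Norm in the dual Ti^star(p,gamma) of a finitely supported functional x
   = sum_k x k e_k^star; computed on the dense subspace c_00. *)
Definition dualnorm (invq g : R) (x : nat -> R) : R :=
  sup [set r | exists (a : nat -> R) (N : nat),
         finsupp a /\ tinorm invq g a <= 1 /\
         (forall k, (N <= k)%N -> x k = 0) /\
         r = \sum_(k < N) x k * a k].

Definition successive (n : nat) (f : 'I_n -> nat -> R) : Prop :=
  forall (i j : 'I_n) (k k' : nat), (i < j)%N -> f i k != 0 -> f j k' != 0 ->
    (k < k')%N.

Definition normalized_block (invq g : R) (x : nat -> R) : Prop :=
  finsupp x /\ dualnorm invq g x = 1.

End Tirilman.

(* Main.v *)
Require Import Defs.
From HB Require Import structures.
From mathcomp Require Import all_boot all_order all_algebra.
From mathcomp Require Import all_classical all_reals all_analysis.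
From mathcomp Require Import lra zify ring.
Import Order.TTheory GRing.Theory Num.Theory.
Local Open Scope ring_scope.

Section Helpers.
Local Open Scope classical_set_scope.
Local Open Scope ring_scope.
Set Implicit Arguments. Unset Strict Implicit.
Section Aux.
Variable R : realType.
Implicit Types a b : nat -> R.

Definition vanish (N : nat) a := forall k, (N <= k)%N -> a k = 0.
Definition l1 (N : nat) a := \sum_(k < N) `|a k|.

Lemma l1_ge0 N a : 0 <= l1 N a.
Proof. by apply: sumr_ge0 => i _. Qed.

Lemma abs_le_l1 N a k : vanish N a -> `|a k| <= l1 N a.
Proof.
move=> va; case: (ltnP k N) => hk.
  rewrite /l1 (bigD1 (Ordinal hk)) //= ler_wpDr //.
  by apply: sumr_ge0 => i _.
by rewrite va // normr0 l1_ge0.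
Qed.

Lemma supnorm_hs N a : vanish N a -> has_sup (range (fun k => `|a k|)).
Proof.
move=> va; split; first by exists `|a 0%N|; exists 0%N.
by exists (l1 N a) => _ [k _ <-]; exact: abs_le_l1.
Qed.

Lemma le_supnorm N a k : vanish N a -> `|a k| <= supnorm a.
Proof.
move=> va; apply: ub_le_sup; first by case: (supnorm_hs va).
by exists k.
Qed.

Lemma supnorm_le_l1 N a : vanish N a -> supnorm a <= l1 N a.
Proof.
move=> va; apply: ge_sup; first by exists `|a 0%N|; exists 0%N.
by move=> _ [k _ <-]; exact: abs_le_l1.
Qed.

Lemma supnorm_ge0 N a : vanish N a -> 0 <= supnorm a.
Proof. by move=> va; apply: le_trans (@le_supnorm N a 0%N va). Qed.

Lemma vanish_restr N m l a : vanish N a -> vanish N (restr m l a).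
Proof. by move=> va k hk; rewrite /restr va // if_same. Qed.

Lemma count_restr a (s : seq (nat * nat)) :
  all (fun e => (e.1 <= e.2)%N) s -> sorted (fun e e' => (e.2 < e'.1)%N) s ->
  forall j, (\sum_(e <- s) `|restr e.1 e.2 a j| <= `|a j|) /\
            ((j < (head (0,0)%N s).1)%N -> \sum_(e <- s) `|restr e.1 e.2 a j| = 0).
Proof.
elim: s => [|e s IH] /=.
  by move=> _ _ j; rewrite big_nil; split.
move=> /andP[he hall] hs j.
have hs' : sorted (fun e e' => (e.2 < e'.1)%N) s by exact: path_sorted hs.
have Z : forall j, (j <= e.2)%N -> \sum_(e <- s) `|restr e.1 e.2 a j| = 0.
  move=> j' hj'; case: s hs IH hall hs' => [|e' s'] hs IH hall hs'.
    by rewrite big_nil.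
  move: hs => /= /andP[he' _].
  by apply: (IH hall hs' j').2 => /=; apply: leq_ltn_trans hj' he'.
rewrite big_cons; split.
  rewrite {1}/restr; case: ifP => hj.
    by rewrite Z ?addr0 //; case/andP: hj.
  by rewrite normr0 add0r; exact: (IH hall hs' j).1.
move=> hj; rewrite Z; last by apply: leq_trans (ltnW hj) he.
by rewrite /restr ifF ?normr0 ?addr0 // leqNgt hj.
Qed.

Lemma sum_l1_restr N a (s : seq (nat * nat)) : admissible s ->
  \sum_(e <- s) l1 N (restr e.1 e.2 a) <= l1 N a.
Proof.
move=> [_ [hall hs]]; rewrite /l1 exchange_big /=.
by apply: ler_sum => k _; exact: (count_restr a hall hs k).1.
Qed.

Lemma adm1 : admissible [:: (0,0)%N].
Proof. by split. Qed.

Variables (invq g : R).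
Hypotheses (hq0 : 0 <= invq) (hg0 : 0 < g) (hg1 : g <= 1).

Definition Sin k a := [set r | exists s, admissible s /\
          r = (\sum_(e <- s) tin_iter invq g k (restr e.1 e.2 a))
                / ((size s)%:R `^ invq)].

Lemma tin_S k a : tin_iter invq g k.+1 a = Num.max (supnorm a) (g * sup (Sin k a)).
Proof. by []. Qed.

Lemma Sin_ne k a : Sin k a !=set0.
Proof. by eexists; exists [:: (0,0)%N]; split; [exact: adm1|]. Qed.

Lemma size_pow_ge1 (s : seq (nat * nat)) : admissible s -> 1 <= (size s)%:R `^ invq.
Proof.
move=> [hne _].
have h1 : (1 <= (size s)%:R :> R) by rewrite ler1n lt0n size_eq0.
by have := ler_powR h1 hq0; rewrite powRr0.
Qed.

Lemma div_le (x d L : R) : x <= L -> 0 <= L -> 1 <= d -> x / d <= L.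
Proof.
move=> h1 h2 h3; rewrite ler_pdivrMr; last by apply: lt_le_trans h3.
by apply: le_trans h1 _; rewrite ler_peMr.
Qed.

Lemma T_bound k : forall N a, vanish N a -> tin_iter invq g k a <= l1 N a.
Proof.
elim: k => [|k IH] N a va /=; first exact: supnorm_le_l1 va.
rewrite ge_max (supnorm_le_l1 va) /=.
have : sup (Sin k a) <= l1 N a.
  apply: ge_sup; first exact: Sin_ne.
  move=> _ [s [hs ->]]; apply: div_le; [|exact: l1_ge0|exact: size_pow_ge1].
  apply: le_trans (sum_l1_restr N a hs).
  by apply: ler_sum => e _; apply: (IH N); exact: vanish_restr va.
have := l1_ge0 N a; move=> h1 h2; apply: le_trans (ler_wpM2l (ltW hg0) h2) _.
by rewrite ler_piMl.
Qed.


Lemma Sin_ub k N a : vanish N a -> ubound (Sin k a) (l1 N a).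
Proof.
move=> va _ [s [hs ->]]; apply: div_le; [|exact: l1_ge0|exact: size_pow_ge1].
apply: le_trans (sum_l1_restr N a hs).
by apply: ler_sum => e _; apply: T_bound; exact: vanish_restr.
Qed.

Lemma Sin_hs k N a : vanish N a -> has_sup (Sin k a).
Proof. by move=> va; split; [exact: Sin_ne| exists (l1 N a); exact: Sin_ub]. Qed.

Lemma T_ge0 k N a : vanish N a -> 0 <= tin_iter invq g k a.
Proof.
case: k => [|k] va /=; first exact: supnorm_ge0 va.
by rewrite le_max (supnorm_ge0 va).
Qed.

Lemma T_mono1 k : forall N a, vanish N a ->
  tin_iter invq g k a <= tin_iter invq g k.+1 a.
Proof.
elim: k => [|k IH] N a va.
  by rewrite tin_S le_max lexx.
rewrite !tin_S ge_max le_max lexx /= le_max; apply/orP; right.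
apply: ler_wpM2l; first exact: ltW.
apply: ge_sup; first exact: Sin_ne.
move=> _ [s [hs ->]].
apply: le_trans (_ : (\sum_(e <- s) tin_iter invq g k.+1 (restr e.1 e.2 a))
                / ((size s)%:R `^ invq) <= _).
  apply: ler_wpM2r; first by rewrite invr_ge0 powR_ge0.
  by apply: ler_sum => e _; apply: (IH N); exact: vanish_restr va.
apply: ub_le_sup; first by case: (Sin_hs k.+1 va).
by exists s.
Qed.

Lemma T_mono k k' N a : (k <= k')%N -> vanish N a ->
  tin_iter invq g k a <= tin_iter invq g k' a.
Proof.
move=> hk va; elim: k' hk => [|k' IH]; first by rewrite leqn0 => /eqP ->.
rewrite leq_eqVlt => /orP[/eqP ->|hk]; first exact: lexx.
by apply: le_trans (IH hk) (T_mono1 k' va).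
Qed.

Lemma tinorm_hs N a : vanish N a -> has_sup (range (fun k => tin_iter invq g k a)).
Proof.
move=> va; split; first by exists (tin_iter invq g 0 a); exists 0%N.
by exists (l1 N a) => _ [k _ <-]; exact: T_bound.
Qed.

Lemma T_le_tinorm k N a : vanish N a -> tin_iter invq g k a <= tinorm invq g a.
Proof.
move=> va; apply: ub_le_sup; first by case: (tinorm_hs va).
by exists k.
Qed.

Lemma tinorm_ge0 N a : vanish N a -> 0 <= tinorm invq g a.
Proof. by move=> va; apply: le_trans (T_ge0 0 va) (T_le_tinorm 0 va). Qed.

Lemma vanish_scale N c b : vanish N b -> vanish N (fun j => c * b j).
Proof. by move=> vb k hk; rewrite vb // mulr0. Qed.

Lemma restr_scale m l c b :
  restr m l (fun j => c * b j) = (fun j => c * restr m l b j).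
Proof. by apply: funext => j; rewrite /restr; case: ifP; rewrite ?mulr0. Qed.

Lemma supnorm_scale N c b : 0 < c -> vanish N b ->
  supnorm (fun j => c * b j) <= c * supnorm b.
Proof.
move=> hc vb; apply: ge_sup; first by exists `|c * b 0%N|; exists 0%N.
move=> _ [k _ <-] /=; rewrite normrM gtr0_norm //.
by apply: ler_wpM2l; [exact: ltW|exact: le_supnorm vb].
Qed.

Lemma T_scale k : forall N c b, 0 < c -> vanish N b ->
  tin_iter invq g k (fun j => c * b j) <= c * tin_iter invq g k b.
Proof.
elim: k => [|k IH] N c b hc vb; first exact: (supnorm_scale hc vb).
rewrite !tin_S ge_max; apply/andP; split.
  apply: le_trans (supnorm_scale hc vb) _.
  by apply: ler_wpM2l; [exact: ltW|rewrite le_max lexx].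
apply: le_trans (_ : g * (c * sup (Sin k b)) <= _).
  apply: ler_wpM2l; first exact: ltW.
  apply: ge_sup; first exact: Sin_ne.
  move=> _ [s [hs ->]].
  apply: le_trans (_ : (c * \sum_(e <- s) tin_iter invq g k (restr e.1 e.2 b))
                / ((size s)%:R `^ invq) <= _).
    apply: ler_wpM2r; first by rewrite invr_ge0 powR_ge0.
    rewrite mulr_sumr; apply: ler_sum => e _; rewrite restr_scale.
    by apply: (IH N) => //; exact: vanish_restr vb.
  rewrite -mulrA; apply: ler_wpM2l; first exact: ltW.
  apply: ub_le_sup; first by case: (Sin_hs k vb).
  by exists s.
rewrite mulrCA; apply: ler_wpM2l; first exact: ltW.
by rewrite le_max lexx orbT.
Qed.

Lemma tinorm_scale N c b : 0 < c -> vanish N b ->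
  tinorm invq g (fun j => c * b j) <= c * tinorm invq g b.
Proof.
move=> hc vb; apply: ge_sup; first by eexists; exists 0%N.
move=> _ [k _ <-]; apply: le_trans (T_scale k hc vb) _.
by apply: ler_wpM2l; [exact: ltW|exact: T_le_tinorm vb].
Qed.

End Aux.

Lemma sorted_iota_rel (r : rel nat) a k :
  (forall j, (a <= j)%N -> (j.+1 < a + k)%N -> r j j.+1) -> sorted r (iota a k).
Proof.
elim: k a => [|k IH] a h //=.
case: k IH h => [|k] IH h //=.
rewrite (h a) //=; last by lia.
have := IH a.+1; rewrite /= => -> // j hj hjk; apply: h; first exact: ltnW.
by lia.
Qed.

Lemma sum_widen (R : realType) (F : nat -> R) N M : (N <= M)%N ->
  (forall k, (N <= k)%N -> F k = 0) -> \sum_(k < N) F k = \sum_(k < M) F k.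
Proof.
move=> hNM hF; rewrite (big_ord_widen M F hNM) big_mkcond /=.
by apply: eq_bigr => i _; case: ifP => // /negbT; rewrite -leqNgt => /hF ->.
Qed.

Lemma tinorm_le_l1 (R : realType) (invq g : R) N a :
  0 <= invq -> 0 < g -> g <= 1 -> vanish N a -> tinorm invq g a <= l1 N a.
Proof.
move=> hq hg0 hg1 va; apply: ge_sup; first by eexists; exists 0%N.
by move=> _ [k _ <-]; exact: T_bound.
Qed.

Lemma nz_block (R : realType) (invq g : R) x :
  0 <= invq -> 0 < g -> g <= 1 -> normalized_block invq g x -> exists k, x k != 0.
Proof.
move=> hq hg0 hg1 [_ hd]; apply/not_existsP => hx.
have x0 : forall k, x k = 0 by move=> k; apply/eqP/negbNE/negP/hx.
have : dualnorm invq g x <= 0.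
  apply: ge_sup.
    exists 0; exists (fun=> 0), 0%N; split; first by exists 0%N.
    split; last by split => //; rewrite big_ord0.
    have h : vanish 0 (fun=> (0:R)) by [].
    by apply: le_trans (tinorm_le_l1 hq hg0 hg1 h) _; rewrite /l1 big_ord0.
  move=> _ [a [N [_ [_ [_ ->]]]]].
  by rewrite big1 // => i _; rewrite x0 mul0r.
by rewrite hd ler10.
Qed.

Lemma dual_le (R : realType) (invq g : R) x N :
  0 <= invq -> 0 < g -> g <= 1 ->
  normalized_block invq g x -> vanish N x ->
  forall b Nb, vanish Nb b -> \sum_(k < N) x k * b k <= tinorm invq g b.
Proof.
move=> hq hg0 hg1 [_ hd] vx b Nb vb.
have hs : has_sup [set r | exists (a : nat -> R) (N : nat),
         finsupp a /\ tinorm invq g a <= 1 /\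
         (forall k, (N <= k)%N -> x k = 0) /\
         r = \sum_(k < N) x k * a k].
  apply: contrapT => hns.
  by move: hd; rewrite /dualnorm sup_out // => /eqP; rewrite eq_sym oner_eq0.
apply/ler_addgt0Pr => e he.
set t := tinorm invq g b.
have t0 : 0 <= t by exact: tinorm_ge0 vb.
have hte : 0 < t + e by rewrite ltr_wpDl.
set c := (t + e)^-1.
have hc : 0 < c by rewrite invr_gt0.
have h1 : tinorm invq g (fun j => c * b j) <= 1.
  apply: le_trans (tinorm_scale hq hg0 hg1 hc vb) _.
  by rewrite mulrC ler_pdivrMr // mul1r lerDl ltW.
have h2 : \sum_(k < N) x k * (c * b k) <= 1.
  rewrite -hd /dualnorm; apply: ub_le_sup; first by case: hs.
  exists (fun j => c * b j), N; split; first by exists Nb; exact: vanish_scale.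
  by split => //; split.
have -> : \sum_(k < N) x k * b k = (t + e) * \sum_(k < N) x k * (c * b k).
  have hce : (t + e) * c = 1 by rewrite /c mulfV // gt_eqF.
  rewrite mulr_sumr; apply: eq_bigr => k _.
  by rewrite -[LHS]mul1r -{1}hce; ring.
by rewrite -[X in _ <= X]mulr1; apply: ler_wpM2l => //; exact: ltW.
Qed.

End Helpers.

Theorem lemma7 (R : realType) (p q gamma : R)
  (hp : 1 < p) (hpq : p^-1 + q^-1 = 1) (hg0 : 0 < gamma) (hg1 : gamma < 1)
  (n : nat) (x : 'I_n -> nat -> R)
  (hblock : forall i, normalized_block q^-1 gamma (x i))
  (hsucc : successive x) :
  dualnorm q^-1 gamma (fun k => \sum_(i < n) x i k)
    <= (n%:R `^ q^-1) / gamma.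
Proof.
have hq : 0 < q^-1.
  have hp1 : p^-1 < 1 by rewrite invf_lt1 // (lt_trans ltr01 hp).
  have -> : q^-1 = 1 - p^-1 by rewrite -hpq addrAC subrr add0r.
  by rewrite subr_gt0.
have hq0 := ltW hq.
have hg1' := ltW hg1.
have hne : forall (X : nat -> R) N0, vanish N0 X -> ([set r | exists (a : nat -> R) (N : nat),
         finsupp a /\ tinorm q^-1 gamma a <= 1 /\
         (forall k, (N <= k)%N -> X k = 0) /\
         r = \sum_(k < N) X k * a k] !=set0)%classic.
  move=> X N0 vX0; exists 0; exists (fun=> 0), N0; split; first by exists 0%N.
  split; last by split => //; rewrite big1 // => k _; rewrite mulr0.
  have h : vanish 0 (fun=> (0:R)) by [].
  by apply: le_trans (tinorm_le_l1 hq0 hg0 hg1' h) _; rewrite /l1 big_ord0.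
case: n x hblock hsucc => [|n] x hblock hsucc.
  rewrite powR0 ?gt_eqF // mul0r; apply: ge_sup.
    by apply: (hne _ 0%N) => k _; rewrite big_ord0.
  move=> _ [a [N [_ [_ [_ ->]]]]].
  by rewrite big1 // => k _; rewrite big_ord0 mul0r.
have [Nf hNf] := @choice _ _ (fun i N => vanish N (x i)) (fun i => (hblock i).1).
apply: ge_sup.
  apply: (hne _ (\max_(i < n.+1) Nf i)) => k hk; rewrite big1 // => i _.
  by apply: hNf; apply: leq_trans hk; exact: leq_bigmax.
move=> _ [a [N [[Na va] [ha [vX ->]]]]].
pose M := maxn (maxn N Na) (\max_(i < n.+1) Nf i).
have vxM : forall i, vanish M (x i).
  move=> i k hk; apply: hNf; have : (Nf i <= \max_(i < n.+1) Nf i)%N by exact: leq_bigmax.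
  rewrite /M in hk; lia.
have vaM : vanish M a by move=> k hk; apply: va; rewrite /M in hk; lia.
have NM : (N <= M)%N by rewrite /M; lia.
have nz : forall i, exists k, x i k != 0.
  by move=> i; exact: nz_block hq0 hg0 hg1' (hblock i).
pose m i := ex_minn (nz i).
have m_nz : forall i, x i (m i) != 0 by move=> i; rewrite /m; case: ex_minnP.
have m_min : forall i k, x i k != 0 -> (m i <= k)%N.
  by move=> i k; rewrite /m; case: ex_minnP => ? _ h /h.
have lt_M : forall i k, x i k != 0 -> (k < M)%N.
  move=> i k hk; case: (ltnP k M) => // hMk.
  by rewrite (vxM i k hMk) eqxx in hk.
pose ml (j : nat) := m (inord j).
pose lr (j : nat) := if (j.+1 < n.+1)%N then (m (inord j.+1)).-1 else M.
pose s := [seq (ml j, lr j) | j <- iota 0 n.+1].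
have supp : forall (i : 'I_n.+1) k, x i k != 0 -> (ml i <= k <= lr i)%N.
  move=> i k hk; rewrite /ml /lr inord_val (m_min _ _ hk) /=.
  case: ifP => hi.
    have hlt : (i < @inord n i.+1)%N by rewrite inordK.
    have := hsucc _ _ _ _ hlt hk (m_nz _); lia.
  exact: ltnW (lt_M _ _ hk).
have m_inc : forall i j : 'I_n.+1, (i < j)%N -> (m i < m j)%N.
  by move=> i j hij; exact: hsucc hij (m_nz i) (m_nz j).
have adm : admissible s.
  split; first by [].
  split.
    apply/allP => e /mapP [j hj ->] /=; rewrite mem_iota add0n in hj.
    have := supp (inord j) _ (m_nz (inord j)); rewrite inordK //.
    by case/andP.
  rewrite sorted_map; apply: sorted_iota_rel => j _ hj /=.
  rewrite add0n in hj; rewrite /lr hj.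
  have := m_inc (inord j) (inord j.+1); rewrite !inordK // ?(ltn_trans _ hj) //.
  by rewrite /ml; move=> /(_ (ltnSn j)); lia.
pose B (j : nat) := restr (ml j) (lr j) a.
have vB : forall j, vanish Na (B j) by move=> j; exact: vanish_restr va.
have stepA : \sum_(k < N) (\sum_(i < n.+1) x i k) * a k =
             \sum_(i < n.+1) \sum_(k < M) x i k * B i k.
  rewrite (@sum_widen R (fun k => (\sum_(i < n.+1) x i k) * a k) N M NM); last first.
    by move=> k hk; rewrite vX // mul0r.
  under eq_bigr do rewrite mulr_suml.
  rewrite exchange_big /=; apply: eq_bigr => i _; apply: eq_bigr => k _.
  rewrite /B /restr; case: (eqVneq (x i k) 0) => [->|hk]; first by rewrite !mul0r.
  by rewrite (supp i k hk).
rewrite stepA.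
apply: le_trans (_ : \sum_(i < n.+1) tinorm q^-1 gamma (B i) <= _).
  apply: ler_sum => i _.
  exact: dual_le hq0 hg0 hg1' (hblock i) (vxM i) _ _ (vB i).
pose d := n.+1%:R `^ q^-1.
have hd : 0 < d by rewrite powR_gt0 // ltr0n.
have key : forall K, \sum_(i < n.+1) tin_iter q^-1 gamma K (B i) <= d / gamma.
  move=> K; set Y := \sum_(i < n.+1) _.
  have hS : Sin q^-1 gamma K a (Y / d).
    exists s; split => //.
    rewrite /s size_map size_iota big_map /Y; congr (_ / _).
    rewrite -(big_mkord xpredT (fun j => tin_iter q^-1 gamma K (B j))).
    by rewrite /index_iota subn0.
  have h1 : gamma * (Y / d) <= 1.
    apply: le_trans ha; apply: le_trans (T_le_tinorm hq0 hg0 hg1' K.+1 va).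
    rewrite tin_S le_max; apply/orP; right.
    apply: ler_wpM2l; first exact: ltW.
    apply: ub_le_sup; first by case: (Sin_hs hq0 hg0 hg1' K va).
    exact: hS.
  rewrite ler_pdivlMr //.
  have -> : Y * gamma = (gamma * (Y / d)) * d.
    by field; rewrite gt_eqF.
  by rewrite -[X in _ <= X]mul1r ler_wpM2r // ltW.
apply/ler_addgt0Pr => e he.
pose eps := e / n.+1%:R.
have heps : 0 < eps by rewrite divr_gt0 // ltr0n.
have hex : forall i : 'I_n.+1, exists k, tinorm q^-1 gamma (B i) - eps <
    tin_iter q^-1 gamma k (B i).
  move=> i; have [_ [k _ <-] h] := sup_adherent heps (tinorm_hs hq0 hg0 hg1' (vB i)).
  by exists k.
have [Kf hK] := choice hex.
pose K := \max_(i < n.+1) Kf i.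
apply: le_trans (_ : \sum_(i < n.+1) (tin_iter q^-1 gamma K (B i) + eps) <= _).
  apply: ler_sum => i _.
  have hKi : (Kf i <= K)%N by exact: leq_bigmax.
  rewrite -lerBlDr; apply: ltW; apply: lt_le_trans (hK i) _.
  exact: (T_mono hq0 hg0 hg1' hKi (vB i)).
rewrite big_split /= sumr_const card_ord.
have -> : eps *+ n.+1 = e.
  by rewrite -mulr_natr /eps mulrAC -mulrA mulfV ?mulr1 // pnatr_eq0.
by rewrite lerD2r; exact: key.
Qed.
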